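(* Let $\eta>0$, $\beta\in\mathbb{R}$, and let $\widehat{\mathcal{L}}\in\mathbb{R}^{N\times N}$ satisfy $\langle\widehat{\mathcal{L}}\mathbf{x},\mathbf{x}\rangle\le0$ for all $\mathbf{x}\in\mathbb{R}^N$. For $\gamma>0$ define $$\mathcal{P}_\gamma:=\left[(\eta^2+\beta^2)I-2\eta\widehat{\mathcal{L}}+\widehat{\mathcal{L}}^2\right](\eta I-\widehat{\mathcal{L}})^{-1}(\gamma I-\widehat{\mathcal{L}})^{-1}.$$ With $\gamma_*:=\eta+\frac{\beta^2}{\eta}$, the two-norm condition number satisfies $$\kappa(\mathcal{P}_{\gamma_*})\le 1+\frac{\beta^2}{2\eta^2}.$$
   Context: $\langle\cdot,\cdot\rangle$ is the Euclidean inner product on $\mathbb{R}^N$; $\kappa(A)=\|A\|\,\|A^{-1}\|$ with the operator two-norm. $\mathcal{P}_\gamma$ is the Schur complement $\eta I-\widehat{\mathcal{L}}+\beta^2(\eta I-\widehat{\mathcal{L}})^{-1}$ right-preconditioned by $(\gamma I-\widehat{\mathcal{L}})^{-1}$. *)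

(* Defs.v *)
From HB Require Import structures.
From mathcomp Require Import all_boot all_order all_algebra.
From mathcomp Require Import boolp classical_sets reals.
Set Implicit Arguments. Unset Strict Implicit. Unset Printing Implicit Defensive.
Import Order.TTheory GRing.Theory Num.Theory.
Local Open Scope ring_scope.
Local Open Scope classical_set_scope.

Definition dotv (R : realType) (n : nat) (x y : 'cV[R]_n) : R :=
  \sum_(i < n) x i 0 * y i 0.

Definition vnorm (R : realType) (n : nat) (x : 'cV[R]_n) : R :=
  Num.sqrt (dotv x x).

Definition opnorm (R : realType) (n : nat) (A : 'M[R]_n) : R :=
  sup [set vnorm (A *m x) | x in [set x : 'cV[R]_n | vnorm x <= 1]].

Definition cond2 (R : realType) (n : nat) (A : 'M[R]_n) : R :=
  opnorm A * opnorm (invmx A).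

Definition Pgamma (R : realType) (n : nat) (eta beta gamma : R) (L : 'M[R]_n)
  : 'M[R]_n :=
  ((eta ^+ 2 + beta ^+ 2)%:M - (2 * eta) *: L + L *m L)
    *m invmx (eta%:M - L) *m invmx (gamma%:M - L).

(* Main.v *)
Require Import Defs.
From HB Require Import structures.
From mathcomp Require Import all_boot all_order all_algebra.
From mathcomp Require Import boolp classical_sets reals.
From mathcomp Require Import ring lra.
Import Order.TTheory GRing.Theory Num.Theory.
Local Open Scope ring_scope.

Section Aux.
Local Open Scope classical_set_scope.
Variables (R : realType) (n : nat).
Implicit Types (x y z : 'cV[R]_n) (A : 'M[R]_n).

Lemma dotvDl x y z : dotv (x + y) z = dotv x z + dotv y z.
Proof. by rewrite /dotv -big_split; apply: eq_bigr => i _; rewrite mxE mulrDl. Qed.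
Lemma dotvZl (a : R) x y : dotv (a *: x) y = a * dotv x y.
Proof. by rewrite /dotv mulr_sumr; apply: eq_bigr => i _; rewrite mxE mulrA. Qed.
Lemma dotvC x y : dotv x y = dotv y x.
Proof. by rewrite /dotv; apply: eq_bigr => i _; rewrite mulrC. Qed.
Lemma dotvNl x y : dotv (- x) y = - dotv x y.
Proof. by rewrite -scaleN1r dotvZl mulN1r. Qed.
Lemma dotvBl x y z : dotv (x - y) z = dotv x z - dotv y z.
Proof. by rewrite dotvDl dotvNl. Qed.
Lemma dotvDr x y z : dotv z (x + y) = dotv z x + dotv z y.
Proof. by rewrite !(dotvC z) dotvDl. Qed.
Lemma dotvZr (a : R) x y : dotv y (a *: x) = a * dotv y x.
Proof. by rewrite !(dotvC y) dotvZl. Qed.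
Lemma dotv_ge0 x : 0 <= dotv x x.
Proof. by apply: sumr_ge0 => i _; rewrite -expr2 sqr_ge0. Qed.
Lemma dotv_le0 x : dotv x x <= 0 -> x = 0.
Proof.
move=> h; have h0 : dotv x x = 0 by apply/eqP; rewrite eq_le h dotv_ge0.
apply/matrixP => i j; rewrite (ord1 j) mxE.
have hp : forall k : 'I_n, xpredT k -> 0 <= x k 0 * x k 0.
  by move=> k _; rewrite -expr2 sqr_ge0.
have := @psumr_eq0P R _ xpredT (fun i => x i 0 * x i 0) hp h0 i isT.
by move=> /eqP; rewrite mulf_eq0 orbb => /eqP.
Qed.

Lemma dot3 (u p q : 'cV[R]_n) (a1 a2 a3 : R) :
  dotv (a1 *: u + a2 *: p + a3 *: q) (a1 *: u + a2 *: p + a3 *: q) =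
  a1^+2 * dotv u u + a2^+2 * dotv p p + a3^+2 * dotv q q
  + 2 * a1 * a2 * dotv u p + 2 * a1 * a3 * dotv u q + 2 * a2 * a3 * dotv p q.
Proof.
rewrite !dotvDl !dotvDr !dotvZl !dotvZr (dotvC p u) (dotvC q u) (dotvC q p).
ring.
Qed.

Lemma ker_unit A : (forall x, A *m x = 0 -> x = 0) -> A \in unitmx.
Proof.
move=> hk; rewrite unitmxE unitfE -det_tr; apply/negP => /det0P [v vnz hv].
have : A *m v^T = 0 by rewrite -(trmxK A) -trmx_mul hv trmx0.
move=> /hk /(congr1 trmx); rewrite trmxK trmx0 => hv0.
by rewrite hv0 eqxx in vnz.
Qed.

Lemma vnorm_le x y (K : R) : 0 <= K -> dotv x x <= K^+2 * dotv y y ->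
  vnorm x <= K * vnorm y.
Proof.
move=> hK h; rewrite /vnorm -(ger0_norm hK) -sqrtr_sqr -sqrtrM ?sqr_ge0 //.
by rewrite ler_sqrt // mulr_ge0 ?sqr_ge0 ?dotv_ge0.
Qed.

Lemma vnorm0 : vnorm (0 : 'cV[R]_n) = 0.
Proof. by rewrite /vnorm /dotv big1 ?sqrtr0 // => i _; rewrite mxE mul0r. Qed.

Lemma opnorm_le A (K : R) : 0 <= K -> (forall x, vnorm (A *m x) <= K * vnorm x) ->
  0 <= opnorm A <= K.
Proof.
move=> hK h.
have ub : ubound [set vnorm (A *m x) | x in [set x : 'cV[R]_n | vnorm x <= 1]] K.
  move=> r [x hx <-]; apply: (le_trans (h x)).
  by rewrite -[leRHS]mulr1 ler_wpM2l.
have ne : [set vnorm (A *m x) | x in [set x : 'cV[R]_n | vnorm x <= 1]] (vnorm (A *m 0)).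
  by exists 0 => //=; rewrite vnorm0 ler01.
apply/andP; split; last by apply: ge_sup => //; exists (vnorm (A *m 0)).
rewrite /opnorm; apply: le_trans (sup_upper_bound _ ne).
  by rewrite mulmx0 vnorm0.
by split; [exists (vnorm (A *m 0)) | exists K].
Qed.

End Aux.

Definition F3 {R : realType} (a b d f g h a1 a2 a3 : R) :=
  a1^+2 * a + a2^+2 * d + a3^+2 * h + 2 * a1 * a2 * b + 2 * a1 * a3 * g + 2 * a2 * a3 * f.

Lemma g1 (R: realType) (e c a b d f g h : R) : 0 < e -> 0 <= c -> 0 <= a -> 0<= d -> b <= 0 -> f <= 0 ->
 0 <= F3 a b d f g h (e^+2+c*e) 0 1 ->
 F3 a b d f g h (e^+2+c*e) (-(2*e)) 1 <= 1^+2 * F3 a b d f g h ((e+c)*e) (-((e+c)+e)) 1.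
Proof. rewrite /F3 => he hc ha hd hb hf hz. rewrite -subr_ge0.
set LL := (X in _ - X).
set RR := (X in X - LL).
have -> : RR - LL = c * ((4*e+c)*d - 2*(e^+2+c*e)*b - 2*f) by rewrite /LL /RR; ring.
apply: mulr_ge0 => //. have : 0 <= (e^+2+c*e) * (-b) by apply: mulr_ge0; nra. nra. Qed.

Lemma g2 (R: realType) (e c a b d f g h : R) : 0 < e -> 0 <= c -> 0 <= a -> 0<= d -> b <= 0 -> f <= 0 ->
 0 <= F3 a b d f g h (e^+2+c*e) 0 1 ->
 F3 a b d f g h ((e+c)*e) (-((e+c)+e)) 1 <= (1 + c / (2 * e))^+2 * F3 a b d f g h (e^+2+c*e) (-(2*e)) 1.
Proof. move=> he hc ha hd hb hf hz.
have -> : 1 + c / (2 * e) = (2*e+c) / (2*e) by field; apply/negP => /eqP H; nra.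
rewrite expr_div_n mulrAC ler_pdivlMr; last by apply: exprn_gt0; nra.
move: hz; rewrite /F3 => hz. rewrite -subr_ge0.
set z := (X in 0 <= X) in hz.
set LL := (X in _ - X).
set RR := (X in X - LL).
have -> : RR - LL = c * ((4*e+c)*z + (8*e^+2+4*e*c)*(-((e^+2+c*e)*b + f))) by rewrite /z /LL /RR; ring.
apply: mulr_ge0 => //. have : 0 <= (e^+2+c*e) * (-b) by apply: mulr_ge0; nra.
move=> H. apply: addr_ge0; apply: mulr_ge0; nra. Qed.

Theorem corollary2 (R : realType) (N : nat) (eta beta : R) (L : 'M[R]_N) :
  0 < eta ->
  (forall x : 'cV[R]_N, dotv (L *m x) x <= 0) ->
  cond2 (Pgamma eta beta (eta + beta ^+ 2 / eta) L)
    <= 1 + beta ^+ 2 / (2 * eta ^+ 2).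
Proof.
move=> he hL.
set c := beta ^+ 2 / eta.
have hc : 0 <= c by rewrite /c divr_ge0 ?sqr_ge0 ?ltW.
have hb2 : beta ^+ 2 = eta ^+ 2 * c / eta by rewrite /c; field; rewrite gt_eqF.
have -> : 1 + beta ^+ 2 / (2 * eta ^+ 2) = 1 + c / (2 * eta).
  by rewrite /c; field; rewrite gt_eqF.
have kerT : forall t, 0 < t -> forall x : 'cV[R]_N, (t%:M - L) *m x = 0 -> x = 0.
  move=> t ht x; rewrite mulmxBl mul_scalar_mx => /eqP; rewrite subr_eq0 => /eqP hx.
  apply: dotv_le0; have := hL x; rewrite -hx dotvZl pmulr_rle0 //.
have hA : (eta%:M - L) \in unitmx by apply: ker_unit; apply: kerT.
have hD : ((eta + c)%:M - L) \in unitmx.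
  by apply: ker_unit; apply: kerT; apply: ltr_wpDr.
set A := eta%:M - L in hA *. set D := (eta + c)%:M - L in hD *.
set M := ((eta ^+ 2 + beta ^+ 2)%:M - (2 * eta) *: L + L *m L).
set P := Pgamma eta beta (eta + c) L.
have key : forall x : 'cV[R]_N, exists u : 'cV[R]_N, x = D *m (A *m u) /\ P *m x = M *m u.
  move=> x; exists (invmx A *m (invmx D *m x)); split.
    by rewrite mulKVmx // mulKVmx.
  by rewrite /P /Pgamma !mulmxA.
have hM : forall u : 'cV[R]_N, M *m u = (eta^+2 + c * eta) *: u + (-(2*eta)) *: (L *m u) + 1 *: (L *m (L *m u)).
  move=> u; rewrite /M mulmxDl mulmxBl mul_scalar_mx -scalemxAl -mulmxA scale1r scaleNr.
  by congr (_ *: _ - _ + _); rewrite hb2; field; rewrite gt_eqF.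
have hDv : forall u : 'cV[R]_N, D *m (A *m u) = ((eta+c)*eta) *: u + (-((eta+c)+eta)) *: (L *m u) + 1 *: (L *m (L *m u)).
  move=> u; rewrite /D /A !mulmxBl !mul_scalar_mx !mulmxBr -!scalemxAr.
  move: (L *m u) (L *m (L *m u)) => p q.
  by apply/matrixP => i j; rewrite !mxE; ring.
have gram : forall (u : 'cV[R]_N) (a1 a2 a3 : R), dotv (a1 *: u + a2 *: (L *m u) + a3 *: (L *m (L *m u)))
   (a1 *: u + a2 *: (L *m u) + a3 *: (L *m (L *m u))) =
   F3 (dotv u u) (dotv u (L *m u)) (dotv (L *m u) (L *m u)) (dotv (L *m u) (L *m (L *m u)))
      (dotv u (L *m (L *m u))) (dotv (L *m (L *m u)) (L *m (L *m u))) a1 a2 a3.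
  by move=> u a1 a2 a3; rewrite dot3 /F3; ring.
have hyps : forall u : 'cV[R]_N, [/\ 0 <= dotv u u, 0 <= dotv (L *m u) (L *m u),
   dotv u (L *m u) <= 0, dotv (L *m u) (L *m (L *m u)) <= 0 &
   0 <= F3 (dotv u u) (dotv u (L *m u)) (dotv (L *m u) (L *m u)) (dotv (L *m u) (L *m (L *m u)))
      (dotv u (L *m (L *m u))) (dotv (L *m (L *m u)) (L *m (L *m u))) (eta^+2 + c * eta) 0 1].
  move=> u; split; rewrite ?dotv_ge0 //.
  - by rewrite dotvC hL.
  - by rewrite dotvC hL.
  - by rewrite -gram dotv_ge0.
have b1 : forall x : 'cV[R]_N, dotv (P *m x) (P *m x) <= 1 ^+ 2 * dotv x x.
  move=> x; have [u [hx hPx]] := key x; rewrite hPx hx.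
  rewrite hM hDv !gram; have [? ? ? ? ?] := hyps u; exact: g1.
have b2 : forall x : 'cV[R]_N, dotv x x <= (1 + c / (2 * eta)) ^+ 2 * dotv (P *m x) (P *m x).
  move=> x; have [u [hx hPx]] := key x; rewrite hPx hx.
  rewrite hM hDv !gram; have [? ? ? ? ?] := hyps u; exact: g2.
have hK : 0 <= 1 + c / (2 * eta) by rewrite addr_ge0 // divr_ge0 // mulr_ge0 // ltW.
have hP : P \in unitmx.
  apply: ker_unit => x hx; apply: dotv_le0; have := b2 x.
  have d0 : dotv (0:'cV[R]_N) 0 = 0 by rewrite /dotv big1 // => i _; rewrite mxE mul0r.
  by rewrite hx d0 mulr0.
have /andP [o1 o2] : 0 <= opnorm P <= 1.
  by apply: opnorm_le => // x; apply: vnorm_le.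
have /andP [o3 o4] : 0 <= opnorm (invmx P) <= 1 + c / (2 * eta).
  apply: opnorm_le => // y; have := b2 (invmx P *m y).
  rewrite mulKVmx //; exact: vnorm_le.
rewrite /cond2 -[leRHS]mul1r; exact: ler_pM.
Qed.
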